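(* Let $T=\mathrm{diag}(t_1,t_2,t_3)$ be a real diagonal matrix with $t_1t_2t_3\neq0$, and define $N_T>0$ by $N_T^{-1}=\int_{S^2}(\boldsymbol n^\intercal T^{-2}\boldsymbol n)^{-2}\,\mathrm{d}^2\boldsymbol n$. Then \[ N_T\,|\det T|\int_{S^2}\sqrt{\boldsymbol n^\intercal T^{2}\boldsymbol n}\;\mathrm{d}^2\boldsymbol n = 1 . \] Consequently, $2\pi N_T|\det T|=1$ holds if and only if $\int_{S^2}\sqrt{\boldsymbol n^\intercal T^{2}\boldsymbol n}\,\mathrm{d}^2\boldsymbol n=2\pi$.
   Context: $S^2$ is the unit sphere in $\mathbb{R}^3$ with its standard surface measure $\mathrm{d}^2\boldsymbol n$. *)

(* Defs.v *)
From Stdlib Require Import Reals Lra.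
Open Scope R_scope.

Definition has_integral (f : R -> R) (a b v : R) : Prop :=
  exists pr : Riemann_integrable f a b, RiemannInt pr = v.

Definition sph_x (th ph : R) : R := sin th * cos ph.
Definition sph_y (th ph : R) : R := sin th * sin ph.
Definition sph_z (th ph : R) : R := cos th.

(* Surface integral over S^2 w.r.t. the standard surface measure
   d^2 n = sin(theta) dphi dtheta :
   sphere_integral f I  <->  int_0^pi ( int_0^{2pi} f(n(th,ph)) dph ) sin th dth = I,
   both integrals being (proper) Riemann integrals. *)
Definition sphere_integral (f : R -> R -> R -> R) (I : R) : Prop :=
  exists g : R -> R,
    (forall th, 0 <= th <= PI ->
       has_integral (fun ph => f (sph_x th ph) (sph_y th ph) (sph_z th ph)) 0 (2 * PI) (g th))
    /\ has_integral (fun th => g th * sin th) 0 PI I.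

Definition quadT2 (t1 t2 t3 x y z : R) : R :=
  t1 ^ 2 * x ^ 2 + t2 ^ 2 * y ^ 2 + t3 ^ 2 * z ^ 2.
Definition quadTm2 (t1 t2 t3 x y z : R) : R :=
  x ^ 2 / t1 ^ 2 + y ^ 2 / t2 ^ 2 + z ^ 2 / t3 ^ 2.

Definition absdetT (t1 t2 t3 : R) : R := Rabs (t1 * t2 * t3).

(* Main.v *)
Require Import Defs.
From Coquelicot Require Import Coquelicot.
From Stdlib Require Import Reals Lra Psatz.
Open Scope R_scope.


Definition Gden (p q x : R) := p * cos x ^ 2 + q * sin x ^ 2.
Definition Gf (p q x : R) := x + atan ((q - p) * sin x * cos x / Gden p q x).
Definition GR2 (p q x : R) := p ^ 2 * cos x ^ 2 + q ^ 2 * sin x ^ 2.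

Lemma sc1 x : sin x ^ 2 + cos x ^ 2 = 1.
Proof. rewrite <- (sin2_cos2 x). unfold Rsqr. ring. Qed.

Lemma Gden_pos p q x : 0 < p -> 0 < q -> 0 < Gden p q x.
Proof. intros. unfold Gden. pose proof (sc1 x).
  destruct (Rle_lt_dec p q); nra. Qed.

Lemma GR2_pos p q x : 0 < p -> 0 < q -> 0 < GR2 p q x.
Proof. intros. unfold GR2. pose proof (sc1 x).
  assert (0 < p^2) by nra. assert (0 < q^2) by nra.
  destruct (Rle_lt_dec (p^2) (q^2)); nra. Qed.

Lemma G_aux p q x : 0 < p -> 0 < q ->
  sqrt (1 + ((q - p) * sin x * cos x / Gden p q x)²) = sqrt (GR2 p q x) / Gden p q x.
Proof. intros hp hq. pose proof (Gden_pos p q x hp hq) as hd.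
  pose proof (GR2_pos p q x hp hq) as hr.
  replace (1 + ((q - p) * sin x * cos x / Gden p q x)²) with (GR2 p q x / (Gden p q x)^2).
  - rewrite sqrt_div_alt by nra. f_equal. rewrite sqrt_pow2; lra.
  - unfold Rsqr. pose proof (sc1 x). unfold GR2. field_simplify_eq; [|lra].
    unfold Gden. replace (sin x ^ 2) with (1 - cos x ^ 2) by lra.
    ring.
Qed.

Lemma G_cos p q x : 0 < p -> 0 < q -> cos (Gf p q x) = p * cos x / sqrt (GR2 p q x).
Proof. intros hp hq. unfold Gf. rewrite cos_plus, cos_atan, sin_atan, G_aux by auto.
  pose proof (Gden_pos p q x hp hq) as hd.
  pose proof (sqrt_lt_R0 _ (GR2_pos p q x hp hq)) as hr.
  pose proof (sc1 x).
  assert (E : cos x * Gden p q x - sin x * ((q - p) * sin x * cos x) = p * cos x).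
  { unfold Gden. replace (sin x ^ 2) with (1 - cos x ^ 2) by lra.
    replace (sin x * ((q - p) * sin x * cos x)) with ((q-p) * cos x * sin x ^ 2) by ring.
    replace (sin x ^ 2) with (1 - cos x ^ 2) by lra. ring. }
  rewrite <- E. field. lra.
Qed.

Lemma G_sin p q x : 0 < p -> 0 < q -> sin (Gf p q x) = q * sin x / sqrt (GR2 p q x).
Proof. intros hp hq. unfold Gf. rewrite sin_plus, cos_atan, sin_atan, G_aux by auto.
  pose proof (Gden_pos p q x hp hq) as hd.
  pose proof (sqrt_lt_R0 _ (GR2_pos p q x hp hq)) as hr.
  pose proof (sc1 x).
  assert (E : sin x * Gden p q x + cos x * ((q - p) * sin x * cos x) = q * sin x).
  { unfold Gden. 
    replace (cos x * ((q - p) * sin x * cos x)) with ((q-p) * sin x * cos x ^ 2) by ring.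
    replace (cos x ^ 2) with (1 - sin x ^ 2) by lra. ring. }
  rewrite <- E. field. lra.
Qed.

Lemma sred x n : sin x ^ (S (S n)) = sin x ^ n * (1 - cos x ^ 2).
Proof. pose proof (sc1 x). assert (E: 1 - cos x ^ 2 = sin x ^ 2) by lra. rewrite E. simpl. ring. Qed.

Ltac sred_tac x := repeat (rewrite (sred x)); simpl pow; ring.

Lemma G_derive p q x : 0 < p -> 0 < q -> is_derive (Gf p q) x (p * q / GR2 p q x).
Proof. intros hp hq. unfold Gf.
  pose proof (Gden_pos p q x hp hq) as hd.
  pose proof (GR2_pos p q x hp hq) as hr.
  pose proof (G_aux p q x hp hq) as ha.
  pose proof (sc1 x) as h1.
  unfold Gden in *. unfold GR2 in *. auto_derive. nra.
  assert (hu : 0 < 1 + ((q - p) * sin x * cos x / (p * cos x ^ 2 + q * sin x ^ 2))²).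
  { pose proof (Rle_0_sqr ((q - p) * sin x * cos x / (p * cos x ^ 2 + q * sin x ^ 2))). lra. }
  unfold Rsqr in hu. 
  field_simplify_eq. 2: { repeat split; simpl in *; try lra. nra. }
  sred_tac x.
Qed.

Definition C2 (f : R -> R -> R) := forall x y, continuity_2d_pt f x y.

Lemma C2_swap f : C2 f -> C2 (fun u v => f v u).
Proof. intros H x y eps. destruct (H y x eps) as [d Hd]. exists d. intros u v h1 h2. apply Hd; auto. Qed.

Lemma C2_cont1 f x y : C2 f -> continuous (fun u => f u y) x.
Proof. intros H. apply continuity_pt_filterlim.
  intros eps heps. destruct (H x y (mkposreal eps heps)) as [d Hd].
  exists d. split. apply cond_pos. intros u [_ hu]. simpl in *. unfold R_dist in *.
  apply Hd; auto. rewrite Rminus_diag, Rabs_R0. apply cond_pos. Qed.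

Lemma C2_cont2 f x y : C2 f -> continuous (fun v => f x v) y.
Proof. intros H. apply (C2_cont1 (fun u v => f v u)). now apply C2_swap. Qed.

Lemma C2_exRInt f x c d : C2 f -> ex_RInt (fun y => f x y) c d.
Proof. intros H. apply (ex_RInt_continuous (V := R_CompleteNormedModule)). intros. now apply C2_cont2. Qed.

Lemma param_cont_le (f : R -> R -> R) c d x0 : c <= d -> C2 f ->
  continuity_pt (fun x => RInt (fun y => f x y) c d) x0.
Proof. intros hcd H.
  intros eps heps.
  assert (he : 0 < eps / (d - c + 1)) by (apply Rdiv_lt_0_compat; lra).
  destruct (uniform_continuity_2d f (x0 - 1) (x0 + 1) c d) with (eps := mkposreal _ he) as [del Hd].
  { intros. apply H. }
  exists (Rmin del 1). split. apply Rmin_pos; [apply cond_pos | lra].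
  intros x [_ hx]. simpl in *. unfold R_dist in *.
  pose proof (Rmin_l del 1). pose proof (Rmin_r del 1).
  replace (RInt (fun y => f x y) c d - RInt (fun y => f x0 y) c d) with (RInt (fun y => f x y - f x0 y) c d)
   by (exact (RInt_minus (V:=R_CompleteNormedModule) _ _ _ _ (C2_exRInt _ _ _ _ H) (C2_exRInt _ _ _ _ H))).
  eapply Rle_lt_trans. apply abs_RInt_le_const with (M := eps / (d - c + 1)); auto.
  apply (ex_RInt_minus (V:=R_NormedModule)); apply C2_exRInt; auto.
  intros t ht. apply Rlt_le.
  apply (Hd x0 t x t).
  all: try (rewrite Rminus_diag, Rabs_R0; apply cond_pos).
  all: try (apply Rabs_lt_between' in hx; try apply Rabs_lt_between'; lra).
  assert (0 <= d - c) by lra.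
  apply Rmult_lt_reg_r with (d - c + 1). lra.
  field_simplify; nra.
Qed.

Lemma param_cont (f : R -> R -> R) c d x0 : C2 f ->
  continuous (fun x => RInt (fun y => f x y) c d) x0.
Proof. intros H. apply continuity_pt_filterlim.
  destruct (Rle_dec c d). now apply param_cont_le.
  apply (continuity_pt_ext (fun x => - RInt (fun y => f x y) d c)).
  intros x. exact (opp_RInt_swap (V:=R_CompleteNormedModule) _ _ _ (C2_exRInt _ _ _ _ H)).
  apply continuity_pt_opp. apply param_cont_le; auto; lra.
Qed.

Lemma fubini f a b c d : C2 f ->
  RInt (fun x => RInt (fun y => f x y) c d) a b = RInt (fun y => RInt (fun x => f x y) a b) c d.
Proof. intros H.
  set (K := fun x => RInt (fun y => f x y) c d).
  set (Q := fun z => RInt (fun y => RInt (fun x => f x y) a z) c d).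
  assert (HS : C2 (fun u v => f v u)) by now apply C2_swap.
  assert (DR : forall u v, Derive (fun z => RInt (fun x => f x v) a z) u = f u v).
  { intros u v. apply (Derive_RInt (fun x => f x v) a u). apply filter_forall. intros. exact (C2_exRInt (fun u v => f v u) _ _ _ HS).
    now apply C2_cont1. }
  assert (D : forall z, is_derive Q z (K z)).
  { intros z. unfold Q, K.
    replace (RInt (fun y => f z y) c d) with
      (RInt (fun t => Derive (fun u => RInt (fun x => f x t) a u) z) c d).
    apply (is_derive_RInt_param (fun z y => RInt (fun x => f x y) a z)).
    - apply filter_forall. intros z0 t _. 
      exists (f z0 t). apply (is_derive_RInt (fun x => f x t) (RInt (fun x => f x t) a) a z0).
      apply filter_forall. intros. apply (RInt_correct (V:=R_CompleteNormedModule)). exact (C2_exRInt (fun u v => f v u) _ _ _ HS).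
      now apply C2_cont1.
    - intros t _. apply continuity_2d_pt_ext with (f := f). intros; now rewrite DR. apply H.
    - apply filter_forall. intros y. apply (ex_RInt_continuous (V := R_CompleteNormedModule)). intros.
      apply (param_cont (fun u v => f v u)). auto.
    - apply RInt_ext. intros; now rewrite DR. }
  assert (HI : is_RInt K a b (minus (Q b) (Q a))).
  { apply is_RInt_derive. intros; apply D. intros; apply param_cont; auto. }
  apply is_RInt_unique in HI. rewrite HI. unfold Q.
  rewrite (RInt_ext (fun y => RInt (fun x => f x y) a a) (fun _ => 0)).
  rewrite RInt_const. unfold minus, plus, opp, scal; simpl. unfold mult; simpl. ring.
  intros. exact (RInt_point (V:=R_CompleteNormedModule) _ _).
Qed.

Lemma c2_sin g x y : continuity_2d_pt g x y -> continuity_2d_pt (fun u v => sin (g u v)) x y.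
Proof. intros. apply (continuity_1d_2d_pt_comp sin); auto. apply continuity_sin. Qed.
Lemma c2_cos g x y : continuity_2d_pt g x y -> continuity_2d_pt (fun u v => cos (g u v)) x y.
Proof. intros. apply (continuity_1d_2d_pt_comp cos); auto. apply continuity_cos. Qed.
Lemma c2_sqrt g x y : continuity_2d_pt g x y -> 0 < g x y -> continuity_2d_pt (fun u v => sqrt (g u v)) x y.
Proof. intros. apply (continuity_1d_2d_pt_comp sqrt); auto. now apply sqrt_continuity_pt. Qed.
Lemma c2_pow g x y n : continuity_2d_pt g x y -> continuity_2d_pt (fun u v => (g u v) ^ n) x y.
Proof. intros H. induction n.
  - apply continuity_2d_pt_ext with (fun _ _ => 1). intros; simpl; ring. apply continuity_2d_pt_const.
  - apply continuity_2d_pt_ext with (fun u v => g u v * g u v ^ n). intros; simpl; ring.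
    now apply continuity_2d_pt_mult.
Qed.
Lemma c2_G p q g x y : 0 < p -> 0 < q -> continuity_2d_pt g x y ->
  continuity_2d_pt (fun u v => Gf p q (g u v)) x y.
Proof. intros. apply (continuity_1d_2d_pt_comp (Gf p q)); auto.
  apply continuity_pt_filterlim. apply (ex_derive_continuous (K:=R_AbsRing) (V:=R_NormedModule)). eexists. apply G_derive; auto. Qed.
Lemma c2_inv g x y : continuity_2d_pt g x y -> g x y <> 0 -> continuity_2d_pt (fun u v => / (g u v)) x y.
Proof. intros. now apply continuity_2d_pt_inv. Qed.

Ltac c2 := repeat first [ apply continuity_2d_pt_plus | apply continuity_2d_pt_mult
  | apply continuity_2d_pt_minus | apply continuity_2d_pt_opp
  | apply continuity_2d_pt_id1 | apply continuity_2d_pt_id2 | apply continuity_2d_pt_const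
  | apply c2_sin | apply c2_cos | apply c2_pow | apply c2_G ].

Lemma pos3 u v w x y z : 0 < u -> 0 < v -> 0 < w -> x^2 + y^2 + z^2 = 1 -> 0 < u * x^2 + v * y^2 + w * z^2.
Proof. intros. assert (0 <= x^2) by nra. assert (0 <= y^2) by nra. assert (0 <= z^2) by nra.
  destruct (Rle_dec u v); destruct (Rle_dec u w); destruct (Rle_dec v w); nra. Qed.

Lemma sph1 th ph : (sin th * cos ph)^2 + (sin th * sin ph)^2 + cos th ^ 2 = 1.
Proof. pose proof (sc1 th). pose proof (sc1 ph). 
  replace ((sin th * cos ph)^2 + (sin th * sin ph)^2) with (sin th ^2 * (sin ph ^2 + cos ph^2)) by ring. nra. Qed.

Lemma quadTm2_pos t1 t2 t3 th ph : t1 * t2 * t3 <> 0 ->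
  0 < quadTm2 t1 t2 t3 (sin th * cos ph) (sin th * sin ph) (cos th).
Proof. intros hT. unfold quadTm2.
  assert (t1 <> 0) by (intro; apply hT; subst; ring).
  assert (t2 <> 0) by (intro; apply hT; subst; ring).
  assert (t3 <> 0) by (intro; apply hT; subst; ring).
  replace ((sin th * cos ph) ^ 2 / t1 ^ 2 + (sin th * sin ph) ^ 2 / t2 ^ 2 + cos th ^ 2 / t3 ^ 2)
   with (/t1^2 * (sin th * cos ph) ^ 2 + /t2^2 * (sin th * sin ph) ^ 2 + /t3^2 * cos th ^ 2) by (field; auto).
  apply pos3; try apply sph1; apply Rinv_0_lt_compat; apply pow2_gt_0; auto. Qed.

Lemma quadT2_pos t1 t2 t3 th ph : t1 * t2 * t3 <> 0 ->
  0 < quadT2 t1 t2 t3 (sin th * cos ph) (sin th * sin ph) (cos th).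
Proof. intros hT. unfold quadT2.
  assert (t1 <> 0) by (intro; apply hT; subst; ring).
  assert (t2 <> 0) by (intro; apply hT; subst; ring).
  assert (t3 <> 0) by (intro; apply hT; subst; ring).
  apply pos3; try apply sph1; apply pow2_gt_0; auto. Qed.

Definition SI (f : R -> R -> R -> R) :=
  RInt (fun th => RInt (fun ph => f (sph_x th ph) (sph_y th ph) (sph_z th ph)) 0 (2 * PI) * sin th) 0 PI.

Lemma sphere_exists f : C2 (fun th ph => f (sph_x th ph) (sph_y th ph) (sph_z th ph)) ->
  sphere_integral f (SI f).
Proof. intros H. exists (fun th => RInt (fun ph => f (sph_x th ph) (sph_y th ph) (sph_z th ph)) 0 (2 * PI)).
  split.
  - intros th _. unfold has_integral.
    assert (E : ex_RInt (fun ph => f (sph_x th ph) (sph_y th ph) (sph_z th ph)) 0 (2 * PI)).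
    { exact (C2_exRInt _ th _ _ H). }
    exists (ex_RInt_Reals_0 _ _ _ E). now rewrite <- RInt_Reals.
  - unfold has_integral.
    assert (E : ex_RInt (fun th => RInt (fun ph => f (sph_x th ph) (sph_y th ph) (sph_z th ph)) 0 (2 * PI) * sin th) 0 PI).
    { apply (ex_RInt_continuous (V := R_CompleteNormedModule)). intros.
      apply (continuous_mult (K:=R_AbsRing)). apply param_cont; auto. apply continuity_pt_filterlim, continuity_sin. }
    exists (ex_RInt_Reals_0 _ _ _ E). now rewrite <- RInt_Reals.
Qed.

Lemma sphere_unique f I : sphere_integral f I -> I = SI f.
Proof. intros [g [Hg [pr Hi]]]. rewrite <- Hi, <- RInt_Reals. unfold SI.
  apply RInt_ext. intros x hx. pose proof PI_RGT_0.
  rewrite Rmin_left, Rmax_right in hx by lra.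
  destruct (Hg x ltac:(lra)) as [pr2 H2]. rewrite <- H2, <- RInt_Reals. reflexivity.
Qed.

Lemma G_fix p q a : sin a = 0 -> Gf p q a = a.
Proof. intros h. unfold Gf. rewrite h. replace ((q - p) * 0 * cos a / Gden p q a) with 0.
  rewrite atan_0; ring. unfold Rdiv; ring. Qed.

Lemma dG_cont p q y : 0 < p -> 0 < q -> continuous (fun y => p * q / GR2 p q y) y.
Proof. intros hp hq. apply (ex_derive_continuous (K:=R_AbsRing) (V:=R_NormedModule)).
  pose proof (GR2_pos p q y hp hq). unfold GR2 in *. auto_derive. nra. Qed.

Lemma subst_G p q (f : R -> R) a b : 0 < p -> 0 < q -> sin a = 0 -> sin b = 0 ->
  (forall x, continuous f x) ->
  is_RInt (fun y => p * q / GR2 p q y * f (Gf p q y)) a b (RInt f a b).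
Proof. intros hp hq ha hb hf.
  rewrite <- (G_fix p q a ha) at 2. rewrite <- (G_fix p q b hb) at 2.
  apply (is_RInt_comp (V:=R_CompleteNormedModule) f (Gf p q) (fun y => p * q / GR2 p q y)).
  intros; apply hf. intros; split. apply G_derive; auto. apply dG_cont; auto.
Qed.

Lemma RInt_mult_r f a b k : ex_RInt f a b -> RInt (fun x => f x * k) a b = RInt f a b * k.
Proof. intros h. rewrite Rmult_comm.
  pose proof (RInt_scal (V:=R_CompleteNormedModule) f a b k h) as E.
  unfold scal in E; simpl in E; unfold mult in E; simpl in E. rewrite <- E.
  apply RInt_ext. intros. apply Rmult_comm. Qed.

Section Main.
Variables t1 t2 t3 : R.
Hypothesis hT : t1 * t2 * t3 <> 0.

Definition s1 := Rabs t1.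
Definition s2 := Rabs t2.
Definition s3 := Rabs t3.

Lemma s_pos : 0 < s1 /\ 0 < s2 /\ 0 < s3.
Proof. unfold s1, s2, s3.
  assert (t1 <> 0) by (intro; apply hT; subst; ring).
  assert (t2 <> 0) by (intro; apply hT; subst; ring).
  assert (t3 <> 0) by (intro; apply hT; subst; ring).
  repeat split; apply Rabs_pos_lt; auto. Qed.

Definition F1 th ph := / (quadTm2 t1 t2 t3 (sph_x th ph) (sph_y th ph) (sph_z th ph)) ^ 2.
Definition F2 th ph := sqrt (quadT2 t1 t2 t3 (sph_x th ph) (sph_y th ph) (sph_z th ph)).
Definition al := Gf s1 s2.
Definition dal ph := s1 * s2 / GR2 s1 s2 ph.
Definition rho ph := sqrt (GR2 s1 s2 ph).
Definition H1 th ph := F1 th (al ph) * dal ph * sin th.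

Lemma rho_pos ph : 0 < rho ph.
Proof. destruct s_pos as [? [? ?]]. apply sqrt_lt_R0, GR2_pos; auto. Qed.

Lemma F1_C2 : C2 F1.
Proof. intros x y. unfold F1, quadTm2, sph_x, sph_y, sph_z. unfold Rdiv.
  apply c2_inv. c2. apply pow_nonzero. 
  pose proof (quadTm2_pos t1 t2 t3 x y hT). unfold quadTm2 in H. unfold Rdiv in H. lra.
Qed.

Ltac c2' := repeat first [ apply c2_G | apply continuity_2d_pt_plus | apply continuity_2d_pt_mult
  | apply continuity_2d_pt_minus | apply continuity_2d_pt_opp
  | apply continuity_2d_pt_id1 | apply continuity_2d_pt_id2 | apply continuity_2d_pt_const
  | apply c2_sin | apply c2_cos | apply c2_pow | apply c2_G | apply c2_inv ].

Lemma H1_C2 : C2 H1.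
Proof. destruct s_pos as [hs1 [hs2 hs3]]. intros x y. unfold H1, F1, dal, al, GR2, sph_x, sph_y, sph_z.
  pose proof (quadTm2_pos t1 t2 t3 x (Gf s1 s2 y) hT).
  pose proof (GR2_pos s1 s2 y hs1 hs2). unfold GR2 in *.
  unfold quadTm2 in *. unfold Rdiv in *.
  c2'; auto. apply pow_nonzero; lra. lra.
Qed.

Lemma F2_C2 : C2 F2.
Proof. intros x y. unfold F2. apply c2_sqrt. unfold quadT2, sph_x, sph_y, sph_z. c2'.
  apply quadT2_pos; auto. Qed.

Definition K2 th ph := s1 * s2 * s3 * F2 th ph * sin th.
Lemma K2_C2 : C2 K2.
Proof. intros x y. unfold K2. apply continuity_2d_pt_mult. apply continuity_2d_pt_mult.
  apply continuity_2d_pt_const. apply F2_C2. c2'. Qed.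

Lemma stepA th : RInt (fun ph => F1 th ph) 0 (2 * PI) * sin th = RInt (fun ph => H1 th ph) 0 (2 * PI).
Proof. destruct s_pos as [hs1 [hs2 hs3]].
  assert (E := subst_G s1 s2 (fun ph => F1 th ph) 0 (2 * PI) hs1 hs2 sin_0 sin_2PI
    (fun x => C2_cont2 F1 th x F1_C2)).
  rewrite <- (is_RInt_unique _ _ _ _ E).
  rewrite <- RInt_mult_r by (eexists; exact E).
  apply RInt_ext. intros. unfold H1, dal, al. simpl. ring.
Qed.

Lemma key y ph : s3 * rho ph / GR2 s3 (rho ph) y * H1 (Gf s3 (rho ph) y) ph = K2 y ph.
Proof. destruct s_pos as [hs1 [hs2 hs3]]. pose proof (rho_pos ph) as hr.
  unfold K2, H1, F1, F2, sph_x, sph_y, sph_z, al, dal.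
  rewrite (G_cos s3 (rho ph) y), (G_sin s3 (rho ph) y), (G_cos s1 s2 ph), (G_sin s1 s2 ph) by auto.
  change (sqrt (GR2 s1 s2 ph)) with (rho ph).
  assert (hr2 : GR2 s1 s2 ph = rho ph ^ 2).
  { unfold rho. rewrite pow2_sqrt; auto. apply Rlt_le, GR2_pos; auto. }
  pose proof (GR2_pos s3 (rho ph) y hs3 hr) as hg.
  set (r := rho ph) in *. set (R := sqrt (GR2 s3 r y)).
  assert (hR : 0 < R) by (apply sqrt_lt_R0; auto).
  assert (hR2 : R ^ 2 = GR2 s3 r y) by (unfold R; rewrite pow2_sqrt; lra).
  unfold quadT2, quadTm2.
  rewrite <- (pow2_abs t1), <- (pow2_abs t2), <- (pow2_abs t3).
  change (Rabs t1) with s1. change (Rabs t2) with s2. change (Rabs t3) with s3.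
  assert (hq : s1 ^ 2 * (sin y * cos ph) ^ 2 + s2 ^ 2 * (sin y * sin ph) ^ 2 + s3 ^ 2 * cos y ^ 2 = GR2 s3 r y).
  { unfold GR2. replace (r ^ 2) with (GR2 s1 s2 ph) by auto. unfold GR2. ring. }
  rewrite hq. fold R.
  pose proof (sc1 ph) as h1. pose proof (sc1 y) as h2.
  assert (hm : (r * sin y / R * (s1 * cos ph / r)) ^ 2 / s1 ^ 2 +
     (r * sin y / R * (s2 * sin ph / r)) ^ 2 / s2 ^ 2 + (s3 * cos y / R) ^ 2 / s3 ^ 2
     = (sin y ^ 2 * (sin ph ^ 2 + cos ph ^ 2) + cos y ^ 2) / R ^ 2).
  { field. repeat split; lra. }
  rewrite hm, h1, Rmult_1_r, h2.
  rewrite <- hR2, hr2. field. split; lra.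
Qed.

Lemma stepC ph : RInt (fun th => H1 th ph) 0 PI = RInt (fun th => K2 th ph) 0 PI.
Proof. destruct s_pos as [hs1 [hs2 hs3]]. pose proof (rho_pos ph) as hr.
  assert (E := subst_G s3 (rho ph) (fun th => H1 th ph) 0 PI hs3 hr sin_0 sin_PI
    (fun x => C2_cont1 H1 x ph H1_C2)).
  rewrite <- (is_RInt_unique _ _ _ _ E).
  apply RInt_ext. intros. apply key.
Qed.

Lemma req_ring (a b c : R) : a * (c * b) = a * b * c.
Proof. ring. Qed.

Lemma outer_ex f : C2 f -> ex_RInt (fun th => RInt (fun ph => f th ph) 0 (2 * PI) * sin th) 0 PI.
Proof. intros H. apply (ex_RInt_continuous (V := R_CompleteNormedModule)). intros.
  apply (continuous_mult (K:=R_AbsRing)). apply param_cont; auto.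
  apply continuity_pt_filterlim, continuity_sin. Qed.

Lemma main_eq : SI (fun x y z => / (quadTm2 t1 t2 t3 x y z) ^ 2)
   = s1 * s2 * s3 * SI (fun x y z => sqrt (quadT2 t1 t2 t3 x y z)).
Proof.
  unfold SI. change (RInt (fun th => RInt (fun ph => F1 th ph) 0 (2 * PI) * sin th) 0 PI
   = s1 * s2 * s3 * RInt (fun th => RInt (fun ph => F2 th ph) 0 (2 * PI) * sin th) 0 PI).
  rewrite (RInt_ext (fun th => RInt (fun ph => F1 th ph) 0 (2 * PI) * sin th)
      (fun th => RInt (fun ph => H1 th ph) 0 (2 * PI))) by (intros; apply stepA).
  rewrite (fubini H1 0 PI 0 (2 * PI) H1_C2).
  rewrite (RInt_ext (fun y => RInt (fun x => H1 x y) 0 PI) (fun y => RInt (fun x => K2 x y) 0 PI))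
    by (intros; apply stepC).
  rewrite <- (fubini K2 0 PI 0 (2 * PI) K2_C2).
  rewrite (RInt_ext (fun x => RInt (fun y => K2 x y) 0 (2 * PI))
     (fun th => RInt (fun ph => F2 th ph) 0 (2 * PI) * sin th * (s1 * s2 * s3))).
  rewrite RInt_mult_r by (apply outer_ex, F2_C2). apply Rmult_comm.
  intros th _. unfold K2. 
  rewrite (RInt_ext (fun y => s1 * s2 * s3 * F2 th y * sin th) (fun y => F2 th y * (s1 * s2 * s3 * sin th)))
    by (intros x _; change (s1 * s2 * s3 * F2 th x * sin th = F2 th x * (s1 * s2 * s3 * sin th)); ring).
  rewrite RInt_mult_r by (apply C2_exRInt, F2_C2). apply req_ring.
Qed.

Lemma I2_pos : 0 < SI (fun x y z => sqrt (quadT2 t1 t2 t3 x y z)).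
Proof. unfold SI. pose proof PI_RGT_0.
  apply RInt_gt_0. lra.
  - intros th hth. apply Rmult_lt_0_compat.
    + apply RInt_gt_0. lra. intros. apply sqrt_lt_R0, quadT2_pos; auto.
      intros. exact (C2_cont2 F2 th x F2_C2).
    + apply sin_gt_0; lra.
  - intros. apply (continuous_mult (K:=R_AbsRing)). exact (param_cont F2 0 (2*PI) x F2_C2).
    apply continuity_pt_filterlim, continuity_sin.
Qed.

End Main.

Theorem mainTheorem2 (t1 t2 t3 : R) (hT : t1 * t2 * t3 <> 0) :
  (exists I1, sphere_integral (fun x y z => / (quadTm2 t1 t2 t3 x y z) ^ 2) I1)
  /\ (exists I2, sphere_integral (fun x y z => sqrt (quadT2 t1 t2 t3 x y z)) I2)
  /\ (forall I1 I2 : R,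
        sphere_integral (fun x y z => / (quadTm2 t1 t2 t3 x y z) ^ 2) I1 ->
        sphere_integral (fun x y z => sqrt (quadT2 t1 t2 t3 x y z)) I2 ->
        let NT := / I1 in
        0 < NT
        /\ NT * absdetT t1 t2 t3 * I2 = 1
        /\ (2 * PI * NT * absdetT t1 t2 t3 = 1 <-> I2 = 2 * PI)).
Proof.
  split; [|split].
  - eexists. apply sphere_exists. exact (F1_C2 t1 t2 t3 hT).
  - eexists. apply sphere_exists. exact (F2_C2 t1 t2 t3 hT).
  - intros I1 I2 h1 h2. apply sphere_unique in h1. apply sphere_unique in h2.
    rewrite main_eq in h1 by auto. rewrite <- h2 in h1. subst I1.
    pose proof (I2_pos t1 t2 t3 hT) as hp. rewrite <- h2 in hp.
    destruct (s_pos t1 t2 t3 hT) as [hs1 [hs2 hs3]].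
    assert (hd : absdetT t1 t2 t3 = s1 t1 * s2 t2 * s3 t3).
    { unfold absdetT, s1, s2, s3. now rewrite !Rabs_mult. }
    cbv zeta. rewrite hd.
    assert (hc : 0 < s1 t1 * s2 t2 * s3 t3) by (repeat apply Rmult_lt_0_compat; auto).
    split; [|split].
    + apply Rinv_0_lt_compat. nra.
    + field. lra.
    + replace (2 * PI * / (s1 t1 * s2 t2 * s3 t3 * I2) * (s1 t1 * s2 t2 * s3 t3)) with (2 * PI / I2) by (field; lra).
      split; intros H.
      * apply (Rmult_eq_compat_r I2) in H. unfold Rdiv in H. rewrite Rmult_assoc, Rinv_l in H by lra. lra.
      * rewrite H. field. pose proof PI_RGT_0. lra.
Qed.
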